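(* Let $\Phi$ be the Couch–Torrence inversion, given in Schwarzschild-like coordinates by $\Phi(t,r,\omega)=\left(t,\frac{rM}{r-M},\omega\right)$. (i) (Exterior.) $\Phi$ is a diffeomorphism of $\mathrm{Ext}$ onto itself with $\Phi\circ\Phi=\mathrm{id}$. It satisfies $\Phi^*g=\frac{M^2}{(r-M)^2}\,g$, and it is an isometry of the rescaled metric: $\Phi^*\hat g=\hat g$, where $\hat g=r^{-2}g$. Every point of the photon sphere $\{r=2M\}$ is fixed by $\Phi$. In the outgoing chart of the starting point and the ingoing chart of the image point, $\Phi$ reads $(u,R,\omega)\mapsto(v',R',\omega')=\left(u,\frac{1-MR}{M},\omega\right)$. Consequently $\Phi$ extends to the conformal boundary and exchanges the future horizon $\mathscr H^+$ with future null infinity $\mathscr I^+$. Likewise it exchanges the past horizon $\mathscr H^-$ with past null infinity $\mathscr I^-$. (ii) (Interior.) Let $\mathrm{Int}$ be the interior region $0<r<M$, written in outgoing Eddington–Finkelstein coordinates $(u,r,\omega)\in\mathbb R\times(0,M)\times S^2$ with metric $g=F(r)\,du^2+2\,du\,dr-r^2d\omega^2$. Let $\mathcal N=\mathbb R_v\times(-\infty,0)_r\times S^2$ carry the metric $g_{\mathcal N}=F(r)\,dv^2+2\,dv\,dr-r^2d\omega^2$. Define the map $\Phi:\mathrm{Int}\to\mathcal N$ by $(u,r,\omega)\mapsto\left(u+2r_*(r),\frac{rM}{r-M},\omega\right)$. Then: - $\Phi$ is a diffeomorphism onto $\mathcal N$; - $\Phi^*g_{\mathcal N}=\frac{M^2}{(r-M)^2}g$;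 - $\Phi^*(r^{-2}g_{\mathcal N})=r^{-2}g$, where on each side $r$ denotes the respective radial coordinate. Under the change of coordinate $r'=-r\in(0,\infty)$, $g_{\mathcal N}$ becomes $\left(1+\frac{M}{r'}\right)^2dv^2-2\,dv\,dr'-r'^2d\omega^2$. This is the extreme Reissner–Nordström metric with mass $-M$ and charge $\pm M$ in ingoing Eddington–Finkelstein form. Under $\Phi$, the singularity $r\to0^+$ of $\mathrm{Int}$ corresponds to the singularity $r'\to0^+$ of $\mathcal N$, and the horizon $r\to M^-$ corresponds to the infinity $r'\to+\infty$ of $\mathcal N$.
   Context: Fix $M>0$ and let $F(r)=(1-M/r)^2$. The exterior of the extreme Reissner–Nordström black hole is $\mathrm{Ext}=\mathbb R_t\times(M,\infty)_r\times S^2_\omega$ with metric $g=F(r)\,dt^2-F(r)^{-1}dr^2-r^2d\omega^2$, where $d\omega^2$ is the round metric of the unit sphere. The Regge–Wheeler coordinate is $r_*=r-M+2M\log\frac{|r-M|}{M}-\frac{M^2}{r-M}$ (defined for $r\neq M$). On $(M,\infty)$ one has $dr_*/dr=1/F$ and $r_*(2M)=0$. Put $u=t-r_*$, $v=t+r_*$, $R=1/r$. The rescaled metric $\hat g=R^2g$ reads - $\hat g=R^2(1-MR)^2du^2-2\,du\,dR-d\omega^2$ in the outgoing chart $(u,R,\omega)$; - $\hat g=R^2(1-MR)^2dv^2+2\,dv\,dR-d\omega^2$ in the ingoing chart $(v,R,\omega)$. In the outgoing chart, $\hat g$ extends smoothly to $R=0$, defining future null infinity $\mathscr I^+=\{R=0\}$,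 and to $R=1/M$, defining the past horizon $\mathscr H^-$. In the ingoing chart, $\{R=0\}$ is past null infinity $\mathscr I^-$ and $\{R=1/M\}$ is the future horizon $\mathscr H^+$. The time orientation is the one for which $\partial_t$ is future-directed. *)

(* Defs.v *)
From Stdlib Require Import Reals.
From Coquelicot Require Import Coquelicot.
Open Scope R_scope.

Definition fun2 := R -> R -> R.
Definition dom2 := R -> R -> Prop.

Definition d0 (f : fun2) : fun2 := fun x y => Derive (fun s => f s y) x.
Definition d1 (f : fun2) : fun2 := fun x y => Derive (fun s => f x s) y.

Fixpoint Ck (k : nat) (D : dom2) (f : fun2) : Prop :=
  match k with
  | O => forall x y, D x y ->
           continuous (fun p : R * R => f (fst p) (snd p)) (x, y)
  | S k' => (forall x y, D x y ->
               ex_derive (fun s => f s y) x /\ ex_derive (fun s => f x s) y)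
            /\ Ck k' D f /\ Ck k' D (d0 f) /\ Ck k' D (d1 f)
  end.

Definition smooth2 (D : dom2) (f : fun2) : Prop := forall k, Ck k D f.

(* A map of the form (x, y, omega) |-> (p0 x y, p1 x y, omega), i.e. the
   identity on the sphere factor, is a diffeomorphism from D1 x S^2 onto
   D2 x S^2 iff (p0,p1) is a diffeomorphism from D1 onto D2. *)
Definition diffeo2 (D1 D2 : dom2) (p0 p1 : fun2) : Prop :=
  smooth2 D1 p0 /\ smooth2 D1 p1 /\
  (forall x y, D1 x y -> D2 (p0 x y) (p1 x y)) /\
  exists q0 q1 : fun2,
    smooth2 D2 q0 /\ smooth2 D2 q1 /\
    (forall x y, D2 x y -> D1 (q0 x y) (q1 x y)) /\
    (forall x y, D1 x y -> q0 (p0 x y) (p1 x y) = x /\ q1 (p0 x y) (p1 x y) = y) /\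
    (forall x y, D2 x y -> p0 (q0 x y) (q1 x y) = x /\ p1 (q0 x y) (q1 x y) = y).

(* Warped metrics on (2d region) x S^2:                                *)
(*   g = g00 dx^2 + 2 g01 dx dy + g11 dy^2 + gang domega^2             *)
(* where domega^2 is the round metric of the unit sphere.               *)

Record wmetric := WMetric {
  g00 : fun2; g01 : fun2; g11 : fun2; gang : fun2 }.

(* Pullback of G by (x,y,omega) |-> (p0 x y, p1 x y, omega). *)
Definition pullback (p0 p1 : fun2) (G : wmetric) : wmetric :=
  WMetric
    (fun x y => let a := d0 p0 x y in let c := d0 p1 x y in
       let X := p0 x y in let Y := p1 x y in
       g00 G X Y * a ^ 2 + 2 * g01 G X Y * a * c + g11 G X Y * c ^ 2)
    (fun x y => let a := d0 p0 x y in let b := d1 p0 x y in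
       let c := d0 p1 x y in let d := d1 p1 x y in
       let X := p0 x y in let Y := p1 x y in
       g00 G X Y * a * b + g01 G X Y * (a * d + b * c) + g11 G X Y * c * d)
    (fun x y => let b := d1 p0 x y in let d := d1 p1 x y in
       let X := p0 x y in let Y := p1 x y in
       g00 G X Y * b ^ 2 + 2 * g01 G X Y * b * d + g11 G X Y * d ^ 2)
    (fun x y => gang G (p0 x y) (p1 x y)).

Definition scale (k : fun2) (G : wmetric) : wmetric :=
  WMetric (fun x y => k x y * g00 G x y) (fun x y => k x y * g01 G x y)
          (fun x y => k x y * g11 G x y) (fun x y => k x y * gang G x y).

Definition meq_on (D : dom2) (G H : wmetric) : Prop :=
  forall x y, D x y ->
    g00 G x y = g00 H x y /\ g01 G x y = g01 H x y /\
    g11 G x y = g11 H x y /\ gang G x y = gang H x y.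

Definition F (M r : R) : R := (1 - M / r) ^ 2.

Definition rstar (M r : R) : R :=
  r - M + 2 * M * ln (Rabs (r - M) / M) - M ^ 2 / (r - M).

Definition PhiR (M r : R) : R := r * M / (r - M).

(* Regions (2d parts; the S^2 factor is implicit). *)
Definition ExtD (M : R) : dom2 := fun t r => M < r.
Definition IntD (M : R) : dom2 := fun u r => 0 < r < M.
Definition ND : dom2 := fun v r => r < 0.
Definition NposD : dom2 := fun v r' => 0 < r'.

Definition gExt (M : R) : wmetric :=
  WMetric (fun t r => F M r) (fun t r => 0) (fun t r => - / F M r)
          (fun t r => - r ^ 2).

(* g = F du^2 + 2 du dr - r^2 domega^2  (outgoing EF, interior)
   also used for g_N = F dv^2 + 2 dv dr - r^2 domega^2 *)
Definition gEF (M : R) : wmetric :=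
  WMetric (fun u r => F M r) (fun u r => 1) (fun u r => 0)
          (fun u r => - r ^ 2).

Definition rinv2 : fun2 := fun x r => / r ^ 2.

Definition cfac (M : R) : fun2 := fun x r => M ^ 2 / (r - M) ^ 2.

Definition RN_f (m q r : R) : R := 1 - 2 * m / r + q ^ 2 / r ^ 2.

Definition gRN_in (m q : R) : wmetric :=
  WMetric (fun v r => RN_f m q r) (fun v r => -1) (fun v r => 0)
          (fun v r => - r ^ 2).

(* Main.v *)
Require Import Defs.
From Stdlib Require Import Reals Lra FunctionalExtensionality.
From Coquelicot Require Import Coquelicot.
Open Scope R_scope.

Inductive sm (M : R) : (R -> R) -> Prop :=
| smC c : sm M (fun _ => c)
| smX : sm M (fun r => r)
| smL : sm M (fun r => ln (Rabs (r - M) / M))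
| smI : sm M (fun r => / (r - M))
| smP f g : sm M f -> sm M g -> sm M (fun r => f r + g r)
| smM f g : sm M f -> sm M g -> sm M (fun r => f r * g r).

Lemma sign_abs x : x <> 0 -> sign x * / Rabs x = / x.
Proof.
  intros H. destruct (Rlt_dec x 0).
  - rewrite sign_eq_m1, Rabs_left by lra. field; lra.
  - rewrite sign_eq_1, Rabs_pos_eq by lra. field; lra.
Qed.

Lemma sm_deriv M (HM : 0 < M) h : sm M h ->
  exists h', sm M h' /\ forall r, r <> M -> is_derive h r (h' r).
Proof.
  induction 1.
  - exists (fun _ => 0). split. constructor. intros; auto_derive; auto.
  - exists (fun _ => 1). split. constructor. intros; auto_derive; auto.
  - exists (fun r => / (r - M)). split. constructor. intros r Hr.
    auto_derive.
    + split. lra. split. 2: lra. apply Rmult_lt_0_compat. apply Rabs_pos_lt; lra.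
      apply Rinv_0_lt_compat; lra.
    + replace (r + - M) with (r - M) by ring.
      rewrite <- (sign_abs (r - M)) by lra.
      assert (Rabs (r - M) <> 0) by (apply Rabs_no_R0; lra). field. split; lra.
  - exists (fun r => (-1) * (/ (r - M) * / (r - M))). split.
    repeat constructor. intros r Hr. auto_derive. repeat split; lra. field. lra.
  - destruct IHsm1 as [f' [Hf Hf']]. destruct IHsm2 as [g' [Hg Hg']].
    exists (fun r => f' r + g' r). split. now constructor.
    intros r Hr. apply (is_derive_plus f g); auto.
  - destruct IHsm1 as [f' [Hf Hf']]. destruct IHsm2 as [g' [Hg Hg']].
    exists (fun r => f' r * g r + f r * g' r). split. repeat constructor; auto.
    intros r Hr. eapply is_derive_ext. 2: apply (is_derive_mult f g); auto.
    reflexivity. simpl. intros; apply Rmult_comm.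
Qed.

Definition openI (I : R -> Prop) :=
  forall y, I y -> exists e : posreal, forall z, Rabs (z - y) < e -> I z.
Definition P2 M (I : R -> Prop) (f : fun2) :=
  exists a h, sm M h /\ forall x y, I y -> f x y = a * x + h y.

Lemma locI I y : openI I -> I y -> locally y I.
Proof. intros HI Hy. destruct (HI y Hy) as [e He]. exists e. intros z Hz. apply He. exact Hz. Qed.

Lemma Ck_P2 M I (HM : 0 < M) (HI : openI I) (HIM : forall y, I y -> y <> M) :
  forall k f, P2 M I f -> Ck k (fun _ y => I y) f.
Proof.
  induction k; intros f [a [h [Hh Hf]]].
  - simpl. intros x y Hy.
    destruct (sm_deriv M HM h Hh) as [h' [_ Hd]].
    apply continuous_ext_loc with (fun p => plus (mult a (fst p)) (h (snd p))).
    + destruct (HI y Hy) as [e He]. exists e. intros [u v] [_ Hv].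
      simpl. symmetry. apply Hf. apply He. exact Hv.
    + apply (continuous_plus (fun p : R * R => mult a (fst p)) (fun p => h (snd p))).
      * apply (continuous_mult (fun _ : R * R => a) fst).
        apply continuous_const. apply continuous_fst.
      * apply (continuous_comp snd h). apply continuous_snd.
        simpl. apply (ex_derive_continuous (K := R_AbsRing) (V := R_NormedModule) h). exists (h' y). apply Hd. auto.
  - destruct (sm_deriv M HM h Hh) as [h' [Hh' Hd]].
    split; [|split; [|split]].
    + intros x y Hy. split.
      * apply ex_derive_ext with (fun s => a * s + h y).
        intros; symmetry; apply Hf; auto. auto_derive; auto.
      * apply ex_derive_ext_loc with (fun s => a * x + h s).
        destruct (HI y Hy) as [e He]. exists e. intros z Hz. symmetry. apply Hf. apply He. exact Hz.
        exists (plus zero (h' y)). apply (is_derive_plus (fun _ => a * x) h).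
        apply (is_derive_const (K:=R_AbsRing) (V:=R_NormedModule)). apply Hd; auto.
    + apply IHk. exists a, h. auto.
    + apply IHk. exists 0, (fun _ => a). split. constructor.
      intros x y Hy. unfold d0. rewrite (Derive_ext _ (fun s => a * s + h y)).
      apply is_derive_unique. auto_derive; auto. ring.
      intros; apply Hf; auto.
    + apply IHk. exists 0, h'. split. auto.
      intros x y Hy. unfold Defs.d1. rewrite (Derive_ext_loc _ (fun s => a * x + h s)).
      apply is_derive_unique.
      replace (0 * x + h' y) with (plus zero (h' y)).
      apply (is_derive_plus (fun _ => a * x) h).
      apply (is_derive_const (K:=R_AbsRing) (V:=R_NormedModule)). apply Hd; auto.
      unfold plus, zero; simpl; ring.
      destruct (HI y Hy) as [e He]. exists e. intros z Hz. apply Hf. apply He. exact Hz.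
Qed.

Lemma smooth_P2 M I (HM : 0 < M) (HI : openI I) (HIM : forall y, I y -> y <> M) f :
  P2 M I f -> smooth2 (fun _ y => I y) f.
Proof. intros H k. apply (Ck_P2 M I); auto. Qed.

Lemma d0_fst x y : Defs.d0 (fun t r => t) x y = 1.
Proof. unfold Defs.d0. apply is_derive_unique. auto_derive; auto. Qed.
Lemma d1_fst x y : Defs.d1 (fun t r => t) x y = 0.
Proof. unfold Defs.d1. apply is_derive_unique. auto_derive; auto. Qed.
Lemma d0_Phi M x y : Defs.d0 (fun t r => PhiR M r) x y = 0.
Proof. unfold Defs.d0. apply is_derive_unique. auto_derive; auto. Qed.
Lemma d1_Phi M x y : y <> M -> Defs.d1 (fun t r => PhiR M r) x y = - M^2/(y-M)^2.
Proof. intros H. unfold Defs.d1, PhiR. apply is_derive_unique. auto_derive.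
  repeat split; lra. field. lra. Qed.
Lemma d0_p0 M x y : Defs.d0 (fun u r => u + 2 * rstar M r) x y = 1.
Proof. unfold Defs.d0. apply is_derive_unique. auto_derive; auto. Qed.
Lemma d1_p0 M x y : 0 < M -> y <> M ->
  Defs.d1 (fun u r => u + 2 * rstar M r) x y = 2 * (y^2/(y-M)^2).
Proof. intros HM H. unfold Defs.d1, rstar. apply is_derive_unique. auto_derive.
  - repeat split; try lra. apply Rmult_lt_0_compat. apply Rabs_pos_lt; lra.
      apply Rinv_0_lt_compat; lra.
  - replace (y + - M) with (y - M) by ring.
    assert (Rabs (y - M) <> 0) by (apply Rabs_no_R0; lra).
    assert (Hs : sign (y - M) = Rabs (y - M) / (y - M)).
    { destruct (Rlt_dec (y - M) 0).
      - rewrite sign_eq_m1, Rabs_left by lra. field. lra.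
      - rewrite sign_eq_1, Rabs_pos_eq by lra. field. lra. }
    rewrite Hs. field. lra.
Qed.
Lemma d0_neg x y : Defs.d0 (fun v r' => - r') x y = 0.
Proof. unfold Defs.d0. apply is_derive_unique. auto_derive; auto; ring. Qed.
Lemma d1_neg x y : Defs.d1 (fun v r' => - r') x y = -1.
Proof. unfold Defs.d1. apply is_derive_unique. auto_derive; auto; ring. Qed.
Lemma d0_id x y : Defs.d0 (fun v r' => v) x y = 1.
Proof. apply d0_fst. Qed.
Lemma d1_id x y : Defs.d1 (fun v r' => v) x y = 0.
Proof. apply d1_fst. Qed.

Lemma PhiR_PhiR M r : 0 < M -> r <> M -> PhiR M (PhiR M r) = r.
Proof. intros HM H. unfold PhiR. field. split. lra. intro E. ring_simplify in E. nra. Qed.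

Lemma rstar_Phi M r : 0 < M -> r <> M -> rstar M (PhiR M r) = - rstar M r.
Proof.
  intros HM H. unfold rstar.
  assert (E : PhiR M r - M = M^2/(r-M)) by (unfold PhiR; field; lra).
  rewrite E.
  assert (Ha : 0 < Rabs (r - M)) by (apply Rabs_pos_lt; lra).
  replace (Rabs (M^2/(r-M)) / M) with (/ (Rabs (r - M) / M)).
  2:{ unfold Rdiv. rewrite Rabs_mult, Rabs_inv, (Rabs_pos_eq (M^2)) by apply pow2_ge_0.
      field. lra. }
  rewrite ln_Rinv. unfold PhiR. field. lra.
  apply Rdiv_lt_0_compat; lra.
Qed.

Lemma open_gt M : openI (fun r => M < r).
Proof. intros y Hy. assert (Hp : 0 < y - M) by lra. exists (mkposreal _ Hp).
  intros z Hz. simpl in Hz. apply Rabs_def2 in Hz. lra. Qed.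
Lemma open_lt0 : openI (fun r => r < 0).
Proof. intros y Hy. assert (Hp : 0 < - y) by lra. exists (mkposreal _ Hp).
  intros z Hz. simpl in Hz. apply Rabs_def2 in Hz. lra. Qed.
Lemma open_int M : openI (fun r => 0 < r < M).
Proof. intros y Hy. assert (Hp : 0 < Rmin y (M - y)) by (apply Rmin_glb_lt; lra).
  exists (mkposreal _ Hp).
  intros z Hz. simpl in Hz. apply Rabs_def2 in Hz.
  pose proof (Rmin_l y (M - y)). pose proof (Rmin_r y (M - y)). lra. Qed.

Lemma P2_fst M I : P2 M I (fun t r => t).
Proof. exists 1, (fun _ => 0). split. constructor. intros; ring. Qed.
Lemma P2_Phi M I : (forall y, I y -> y <> M) -> P2 M I (fun t r => PhiR M r).
Proof. intros HI. exists 0, (fun r => M + (M * M) * / (r - M)). split.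
  repeat constructor. intros x y Hy. unfold PhiR. specialize (HI y Hy). field. lra. Qed.
Lemma P2_p0 M I : 0 < M -> (forall y, I y -> y <> M) -> P2 M I (fun u r => u + 2 * rstar M r).
Proof. intros HM HI. exists 1, (fun r => 2 * (r + (- M) + (2 * M) * ln (Rabs (r - M) / M)
    + (- (M * M)) * / (r - M))). split.
  repeat constructor. intros x y Hy. unfold rstar. specialize (HI y Hy). field. lra. Qed.

Lemma Phi_ext M r : 0 < M -> M < r -> M < PhiR M r.
Proof. intros HM H. replace (PhiR M r) with (M + M^2/(r-M)) by (unfold PhiR; field; lra).
  assert (0 < M^2/(r-M)) by (apply Rdiv_lt_0_compat; nra). lra. Qed.
Lemma Phi_int M r : 0 < M -> 0 < r < M -> PhiR M r < 0.
Proof. intros HM H. replace (PhiR M r) with (- (r*M/(M-r))) by (unfold PhiR; field; lra).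
  assert (0 < r*M/(M-r)) by (apply Rdiv_lt_0_compat; nra). lra. Qed.
Lemma Phi_neg M r : 0 < M -> r < 0 -> 0 < PhiR M r < M.
Proof. intros HM H. split.
  replace (PhiR M r) with ((-r)*M/(M-r)) by (unfold PhiR; field; lra).
  apply Rdiv_lt_0_compat; nra.
  replace (PhiR M r) with (M - M^2/(M-r)) by (unfold PhiR; field; lra).
  assert (0 < M^2/(M-r)) by (apply Rdiv_lt_0_compat; nra). lra. Qed.

Lemma lim1 M : 0 < M -> filterlim (fun r => - PhiR M r) (at_right 0) (at_right 0).
Proof.
  intros HM P [e He].
  assert (Hd : 0 < Rmin (M/2) (e/2)) by (apply Rmin_glb_lt; destruct e; simpl; lra).
  exists (mkposreal _ Hd). intros r Hr Hr0. simpl in Hr.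
  change (Rabs (r - 0) < Rmin (M/2) (e/2)) in Hr.
  rewrite Rminus_0_r, Rabs_pos_eq in Hr by lra.
  pose proof (Rmin_l (M/2) (e/2)). pose proof (Rmin_r (M/2) (e/2)).
  assert (Ef : - PhiR M r = r * M / (M - r)) by (unfold PhiR; field; lra).
  rewrite Ef.
  assert (Hpos : 0 < r * M / (M - r)) by (apply Rdiv_lt_0_compat; nra).
  assert (Hlt : r * M / (M - r) < e).
  { apply (Rmult_lt_reg_r (M - r)). lra. unfold Rdiv. rewrite Rmult_assoc, Rinv_l, Rmult_1_r by lra.
    destruct e as [e ep]; simpl in *. nra. }
  apply He. change (Rabs (r * M / (M - r) - 0) < e). rewrite Rminus_0_r, Rabs_pos_eq; lra.
  exact Hpos.
Qed.

Lemma lim2 M : 0 < M -> filterlim (fun r => - PhiR M r) (at_left M) (Rbar_locally p_infty).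
Proof.
  intros HM P [A HA].
  set (B := Rabs A + 1).
  assert (HB : 0 < B) by (unfold B; pose proof (Rabs_pos A); lra).
  assert (Hd : 0 < Rmin (M/2) (M * M / (2 * B))).
  { apply Rmin_glb_lt. lra. apply Rdiv_lt_0_compat; nra. }
  exists (mkposreal _ Hd). intros r Hr Hr0. simpl in Hr.
  change (Rabs (r - M) < Rmin (M/2) (M * M / (2 * B))) in Hr.
  rewrite Rabs_left in Hr by lra.
  pose proof (Rmin_l (M/2) (M * M / (2 * B))). pose proof (Rmin_r (M/2) (M * M / (2 * B))).
  assert (Ef : - PhiR M r = r * M / (M - r)) by (unfold PhiR; field; lra).
  rewrite Ef. apply HA.
  assert (H2 : (M - r) * (2 * B) < M * M).
  { assert (H3 : M - r < M * M / (2 * B)) by lra.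
    apply (Rmult_lt_compat_r (2 * B)) in H3; [|lra].
    unfold Rdiv in H3. rewrite Rmult_assoc, Rinv_l, Rmult_1_r in H3 by lra. exact H3. }
  assert (HA' : A < B) by (unfold B; pose proof (Rle_abs A); lra).
  apply (Rmult_lt_reg_r (M - r)). lra. unfold Rdiv. rewrite Rmult_assoc, Rinv_l, Rmult_1_r by lra.
  nra.
Qed.

Theorem theorem1 (M : R) (HM : 0 < M) :
  (* ---------------- (i) exterior ---------------- *)
  ( (* Phi(t,r,w) = (t, rM/(r-M), w) is a diffeomorphism of Ext onto Ext *)
    diffeo2 (ExtD M) (ExtD M) (fun t r => t) (fun t r => PhiR M r)
    (* Phi o Phi = id *)
    /\ (forall r, M < r -> PhiR M (PhiR M r) = r)
    (* Phi^* g = M^2/(r-M)^2 g *)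
    /\ meq_on (ExtD M) (pullback (fun t r => t) (fun t r => PhiR M r) (gExt M))
                       (scale (cfac M) (gExt M))
    (* Phi^* ghat = ghat, ghat = r^{-2} g *)
    /\ meq_on (ExtD M)
         (pullback (fun t r => t) (fun t r => PhiR M r) (scale rinv2 (gExt M)))
         (scale rinv2 (gExt M))
    (* photon sphere r = 2M is fixed *)
    /\ PhiR M (2 * M) = 2 * M
    (* chart expression: outgoing (u,R) of start, ingoing (v',R') of image:
       v' = u, R' = (1 - M R)/M *)
    /\ (forall t r, M < r ->
          t + rstar M (PhiR M r) = t - rstar M r
          /\ / PhiR M r = (1 - M * / r) / M)
    (* symmetric chart expression: ingoing (v,R) of start, outgoing (u',R')
       of image: u' = v, R' = (1 - M R)/M *)
    /\ (forall t r, M < r ->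
          t - rstar M (PhiR M r) = t + rstar M r
          /\ / PhiR M r = (1 - M * / r) / M)
    (* the chart map R |-> (1 - M R)/M extends to the boundary values
       R = 0 (scri^+ resp. scri^-) and R = 1/M (H^- resp. H^+), exchanging them:
       scri^+ -> H^+, H^- -> scri^-  (and, in the other chart pair,
       scri^- -> H^-, H^+ -> scri^+) *)
    /\ (1 - M * 0) / M = / M /\ (1 - M * / M) / M = 0 )
  /\
  (* ---------------- (ii) interior ---------------- *)
  ( diffeo2 (IntD M) ND (fun u r => u + 2 * rstar M r) (fun u r => PhiR M r)
    /\ meq_on (IntD M)
         (pullback (fun u r => u + 2 * rstar M r) (fun u r => PhiR M r) (gEF M))
         (scale (cfac M) (gEF M))
    /\ meq_on (IntD M)
         (pullback (fun u r => u + 2 * rstar M r) (fun u r => PhiR M r)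
                   (scale rinv2 (gEF M)))
         (scale rinv2 (gEF M))
    (* r' = -r turns g_N into (1+M/r')^2 dv^2 - 2 dv dr' - r'^2 dw^2,
       extreme RN with mass -M and charge +-M in ingoing EF form *)
    /\ meq_on NposD (pullback (fun v r' => v) (fun v r' => - r') (gEF M))
         (WMetric (fun v r' => (1 + M / r') ^ 2) (fun v r' => -1)
                  (fun v r' => 0) (fun v r' => - r' ^ 2))
    /\ (forall q, (q = M \/ q = - M) ->
          meq_on NposD (pullback (fun v r' => v) (fun v r' => - r') (gEF M))
                       (gRN_in (- M) q))
    (* singularity r -> 0+ corresponds to r' -> 0+ *)
    /\ filterlim (fun r => - PhiR M r) (at_right 0) (at_right 0)
    (* horizon r -> M- corresponds to r' -> +oo *)
    /\ filterlim (fun r => - PhiR M r) (at_left M) (Rbar_locally p_infty) ).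
Proof.

  assert (HIe : forall y, M < y -> y <> M) by (intros; lra).
  assert (HIi : forall y, 0 < y < M -> y <> M) by (intros; lra).
  assert (HIn : forall y, y < 0 -> y <> M) by (intros; lra).
  assert (S1 : smooth2 (ExtD M) (fun t r => t)) by
    exact (smooth_P2 M (fun r => M < r) HM (open_gt M) HIe _ (P2_fst _ _)).
  assert (S2 : smooth2 (ExtD M) (fun t r => PhiR M r)) by
    exact (smooth_P2 M (fun r => M < r) HM (open_gt M) HIe _ (P2_Phi _ _ HIe)).
  assert (S3 : smooth2 (IntD M) (fun u r => u + 2 * rstar M r)) by
    exact (smooth_P2 M (fun r => 0 < r < M) HM (open_int M) HIi _ (P2_p0 _ _ HM HIi)).
  assert (S4 : smooth2 (IntD M) (fun t r => PhiR M r)) by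
    exact (smooth_P2 M (fun r => 0 < r < M) HM (open_int M) HIi _ (P2_Phi _ _ HIi)).
  assert (S5 : smooth2 ND (fun u r => u + 2 * rstar M r)) by
    exact (smooth_P2 M (fun r => r < 0) HM open_lt0 HIn _ (P2_p0 _ _ HM HIn)).
  assert (S6 : smooth2 ND (fun t r => PhiR M r)) by
    exact (smooth_P2 M (fun r => r < 0) HM open_lt0 HIn _ (P2_Phi _ _ HIn)).
  split.
  { split; [|split; [|split; [|split; [|split; [|split; [|split]]]]]].
  - split; [exact S1|split; [exact S2|split]].
    + intros x y H. apply Phi_ext; auto.
    + exists (fun t r => t), (fun t r => PhiR M r). split; [|split; [|split; [|split]]].
      * exact S1.
      * exact S2.
      * intros x y H. apply Phi_ext; auto.
      * intros x y H. split; auto. apply PhiR_PhiR; auto.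
      * intros x y H. split; auto. apply PhiR_PhiR; auto.
  - intros r H. apply PhiR_PhiR; lra.
  - intros x y H; unfold ExtD in H. unfold pullback, scale, gExt; simpl.
    rewrite d0_fst, d1_fst, d0_Phi, d1_Phi by lra. unfold F, cfac.
    assert (E1 : 1 - M / PhiR M y = M / y) by (unfold PhiR; field; lra).
    assert (E2 : 1 - M / y = (y - M) / y) by (field; lra).
    rewrite E1, E2. unfold PhiR.
    repeat split; field; lra.
  - intros x y H; unfold ExtD in H. unfold pullback, scale, gExt, rinv2; simpl.
    rewrite d0_fst, d1_fst, d0_Phi, d1_Phi by lra. unfold F, cfac.
    assert (E1 : 1 - M / PhiR M y = M / y) by (unfold PhiR; field; lra).
    assert (E2 : 1 - M / y = (y - M) / y) by (field; lra).
    rewrite E1, E2. unfold PhiR.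
    repeat split; field; lra.
  - unfold PhiR. field. lra.
  - intros t r H. split. rewrite rstar_Phi by lra. ring.
    unfold PhiR. field. lra.
  - intros t r H. split. rewrite rstar_Phi by lra. ring.
    unfold PhiR. field. lra.
  - split; field; lra.
  }
  split; [|split; [|split; [|split; [|split; [|split]]]]].
  - split; [exact S3|split; [exact S4|split]].
    + intros x y H. apply Phi_int; auto.
    + exists (fun u r => u + 2 * rstar M r), (fun t r => PhiR M r).
      split; [|split; [|split; [|split]]].
      * exact S5.
      * exact S6.
      * intros x y H. apply Phi_neg; auto.
      * intros x y H. unfold IntD in H. split.
        rewrite rstar_Phi by lra. ring. apply PhiR_PhiR; lra.
      * intros x y H. unfold ND in H. split.
        rewrite rstar_Phi by lra. ring. apply PhiR_PhiR; lra.
  - intros x y H; unfold IntD in H. unfold pullback, scale, gEF; simpl.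
    rewrite d0_p0, d1_p0, d0_Phi, d1_Phi by lra. unfold F, cfac.
    assert (E1 : 1 - M / PhiR M y = M / y) by (unfold PhiR; field; lra).
    rewrite E1. unfold PhiR.
    repeat split; field; lra.
  - intros x y H; unfold IntD in H. unfold pullback, scale, gEF, rinv2; simpl.
    rewrite d0_p0, d1_p0, d0_Phi, d1_Phi by lra. unfold F, cfac.
    assert (E1 : 1 - M / PhiR M y = M / y) by (unfold PhiR; field; lra).
    rewrite E1. unfold PhiR.
    repeat split; field; lra.
  - intros x y H; unfold NposD in H. unfold pullback, gEF; simpl.
    rewrite d0_id, d1_id, d0_neg, d1_neg. unfold F.
    repeat split; field; lra.
  - intros q Hq x y H; unfold NposD in H. unfold pullback, gEF, gRN_in, RN_f; simpl.
    rewrite d0_id, d1_id, d0_neg, d1_neg. unfold F.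
    assert (Hq2 : q * (q * 1) = M * M) by (destruct Hq; subst; ring).
    rewrite Hq2. repeat split; field; lra.
  - apply lim1; auto.
  - apply lim2; auto.
Qed.
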